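(* Under the setting below, suppose that (P) is feasible for some $\gamma>1$ and that $m>0$ and $G^a>0$ entrywise for all $a$. Let $\bar\gamma_N$ denote the supremum of the values $\gamma>1$ for which (P) is feasible. Then for any $\gamma\in[1,\bar\gamma_N)$ there exist a solution $\theta$ of (P) and a solution $V$ of (D), and at these solutions: (1) for each $j=1,\dots,N-1$ there exists at least one $a_j\in\{1,\dots,M\}$ such that $[V]_j=\gamma[P^1_{T_{a_j}}V]_j+[G^{a_j}]_j$ and $[\theta^{a_j}]_j>0$; (2) there exists a solution $\tilde\theta$ of (P) such that for each $j=1,\dots,N-1$ there is exactly one $a_j\in\{1,\dots,M\}$ with $[\tilde\theta^{a_j}]_j>0$ and $[\tilde\theta^{a'}]_j=0$ for all $a'\ne a_j$.
   Context: Finite-dimensional setting: $\mathcal{X}_N=\{D_1,\dots,D_N\}$ is a finite partition of a compact state space $X\subset\mathbb{R}^q$ with the attractor set $\mathcal{A}\subseteq D_N$; $\mathcal{U}_M=\{u^1,\dots,u^M\}$ is a finite set of control values; $\{\xi^1,\dots,\xi^L\}$ is a finite set of uncertainty values with probabilities $v^1,\dots,v^L\ge0$, $\sum_\ell v^\ell=1$. For the system $x_{n+1}=T(x_n,u_n,\xi_n)$, let $T_{u^a,\xi^\ell}=T(\cdot,u^a,\xi^\ell):X\to X$ and define the $N\times N$ Markov matrix $P_{T_{a,\ell}}$ by $[P_{T_{a,\ell}}]_{ij}=m_L(T_{u^a,\xi^\ell}^{-1}(D_j)\cap D_i)/m_L(D_i)$, $m_L$ the Lebesgue measure. Set $P_{T_a}=\sum_{\ell=1}^L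 v^\ell P_{T_{a,\ell}}$ and let $P^1_{T_a}\in\mathbb{R}^{(N-1)\times(N-1)}$ be the submatrix of its first $N-1$ rows and columns. Let $G^{a,\ell}\in\mathbb{R}^{N-1}$ be given cost vectors ($[G^{a,\ell}]_j$ is the cost of using $u^a$ on $D_j$ with uncertainty $\xi^\ell$) and $G^a=\sum_\ell v^\ell G^{a,\ell}$. Let $m\in\mathbb{R}^{N-1}$ be a given vector. Prime denotes transpose. Primal LP (P): minimize $\sum_{a=1}^M (G^a)'\theta^a$ over $\theta^1,\dots,\theta^M\in\mathbb{R}^{N-1}$, $\theta^a\ge0$, subject to $\gamma\sum_{a=1}^M(P^1_{T_a})'\theta^a-\sum_{a=1}^M\theta^a=-m$. Dual LP (D): maximize $m'V$ over $V\in\mathbb{R}^{N-1}$ subject to $V\le\gamma P^1_{T_a}V+G^a$ (entrywise) for all $a=1,\dots,M$. *)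

(* Defs.v *)
From HB Require Import structures.
From mathcomp Require Import all_boot all_order all_algebra.
Set Implicit Arguments. Unset Strict Implicit. Unset Printing Implicit Defensive.
Import Order.TTheory GRing.Theory Num.Theory.
Local Open Scope ring_scope.

(* Cells D_1..D_N are indexed by 'I_N with N = n.+1; the last cell
   (ord_max) is D_N, containing the attractor.  The first N-1 cells are
   indexed by 'I_n, embedded via widen_ord. *)

Section Setting.
Variables (R : realFieldType) (S : Type) (n M L : nat).

Definition markov_mx (D : 'I_n.+1 -> S -> Prop) (T : 'I_M -> 'I_L -> S -> S)
  (mu : (S -> Prop) -> R) (a : 'I_M) (l : 'I_L) : 'M[R]_n.+1 :=
  \matrix_(i, j) (mu (fun x => D j (T a l x) /\ D i x) / mu (D i)).

Definition markov_avg D T mu (v : 'I_L -> R) (a : 'I_M) : 'M[R]_n.+1 :=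
  \sum_(l < L) v l *: markov_mx D T mu a l.

Definition sub1 (A : 'M[R]_n.+1) : 'M[R]_n :=
  \matrix_(i, j) A (widen_ord (leqnSn n) i) (widen_ord (leqnSn n) j).

Definition cost_avg (v : 'I_L -> R) (Gal : 'I_M -> 'I_L -> 'cV[R]_n) (a : 'I_M)
  : 'cV[R]_n := \sum_(l < L) v l *: Gal a l.

(* Primal LP (P) with data P1 a = P^1_{T_a}, G a = G^a, m, gamma. *)
Definition primal_feasible (P1 : 'I_M -> 'M[R]_n) (m : 'cV[R]_n) (gamma : R)
  (theta : 'I_M -> 'cV[R]_n) : Prop :=
  (forall a i, 0 <= theta a i 0) /\
  gamma *: (\sum_(a < M) (P1 a)^T *m theta a) - \sum_(a < M) theta a = - m.

Definition primal_obj (G : 'I_M -> 'cV[R]_n) (theta : 'I_M -> 'cV[R]_n) : R :=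
  \sum_(a < M) ((G a)^T *m theta a) 0 0.

Definition primal_solution P1 G m gamma theta : Prop :=
  primal_feasible P1 m gamma theta /\
  forall theta', primal_feasible P1 m gamma theta' ->
    primal_obj G theta <= primal_obj G theta'.

Definition dual_feasible (P1 : 'I_M -> 'M[R]_n) (G : 'I_M -> 'cV[R]_n)
  (gamma : R) (V : 'cV[R]_n) : Prop :=
  forall a i, V i 0 <= (gamma *: (P1 a *m V) + G a) i 0.

Definition dual_obj (m : 'cV[R]_n) (V : 'cV[R]_n) : R := (m^T *m V) 0 0.

Definition dual_solution P1 G m gamma V : Prop :=
  dual_feasible P1 G gamma V /\
  forall V', dual_feasible P1 G gamma V' -> dual_obj m V' <= dual_obj m V.

End Setting.

(* Main.v *)
Require Import Defs.
From HB Require Import structures.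
From mathcomp Require Import all_boot all_order all_algebra.
From mathcomp Require Import ring.
Import Order.TTheory GRing.Theory Num.Theory.
Set Implicit Arguments. Unset Strict Implicit.
Local Open Scope ring_scope.

Lemma nn_mul (R : realFieldType) p q (B : 'M[R]_(p, q)) (y : 'cV[R]_q) :
  (forall i j, 0 <= B i j) -> (forall i, 0 <= y i 0) -> forall i, 0 <= (B *m y) i 0.
Proof. by move=> hB hy i; rewrite mxE; apply: sumr_ge0 => j _; rewrite mulr_ge0. Qed.

Lemma mxBE (R : realFieldType) p q (A B : 'M[R]_(p, q)) i j : (A - B) i j = A i j - B i j.
Proof. by rewrite !mxE. Qed.
Lemma mxDE (R : realFieldType) p q (A B : 'M[R]_(p, q)) i j : (A + B) i j = A i j + B i j.
Proof. by rewrite !mxE. Qed.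
Lemma mxZE (R : realFieldType) p q (c : R) (A : 'M[R]_(p, q)) i j : (c *: A) i j = c * A i j.
Proof. by rewrite !mxE. Qed.

Section Z.
Variables (R : realFieldType) (n : nat).
Implicit Types (A B : 'M[R]_n) (x y : 'cV[R]_n).

Definition Zmx A := forall i k, i != k -> A i k <= 0.

Lemma mulmx_row A y i :
  (A *m y) i 0 = A i i * y i 0 + \sum_(k | k != i) A i k * y k 0.
Proof. by rewrite mxE (bigD1 i). Qed.

Lemma Z_pos A x : Zmx A -> (forall i, 0 <= x i 0) ->
  (forall i, 0 < (A *m x) i 0) -> forall i, 0 < x i 0.
Proof.
move=> hZ hx hAx i; rewrite lt_def hx andbT; apply/negP => /eqP x0.
have := hAx i; rewrite mulmx_row x0 mulr0 add0r.
have : \sum_(k | k != i) A i k * x k 0 <= 0.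
  rewrite -oppr_ge0 -sumrN; apply: sumr_ge0 => k ki.
  by rewrite -mulNr mulr_ge0 // oppr_ge0 hZ // eq_sym.
by move=> H1 H2; have := le_lt_trans H1 H2; rewrite ltxx.
Qed.

Lemma Z_mono A x y : Zmx A -> (forall i, 0 <= x i 0) ->
  (forall i, 0 < (A *m x) i 0) ->
  (forall i, 0 <= (A *m y) i 0) -> forall i, 0 <= y i 0.
Proof.
move=> hZ hx hAx hAy i0; have xp := Z_pos hZ hx hAx.
rewrite leNgt; apply/negP => yneg.
pose f := fun j : 'I_n => - y j 0 / x j 0.
have [k _ kmax] := @real_arg_maxP R _ i0 xpredT f isT (fun j _ => num_real (f j)).
have {}kmax j : f j <= f k := kmax j isT.
set t := f k.
have ft0 : 0 < f i0 by rewrite /f divr_gt0 // oppr_gt0.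
have tpos : 0 < t by apply: lt_le_trans ft0 (kmax _).
pose z := y + t *: x.
have zE j : z j 0 = y j 0 + t * x j 0 by rewrite !mxE.
have zge j : 0 <= z j 0.
  rewrite zE -lerBlDl sub0r -ler_pdivrMr //; exact: kmax.
have zk : z k 0 = 0.
  rewrite zE /t /f mulrAC -mulrA divff ?mulr1 ?subrr //; exact: lt0r_neq0 (xp _).
have h1 : 0 < (A *m z) k 0.
  rewrite mulmxDr -scalemxAr.
  have -> : (A *m y + t *: (A *m x)) k 0 = (A *m y) k 0 + t * (A *m x) k 0 by rewrite !mxE.
  by apply: ltr_wpDl (hAy k) _; rewrite mulr_gt0.
move: h1; rewrite mulmx_row zk mulr0 add0r ltNge => /negP; apply.
rewrite -oppr_ge0 -sumrN; apply: sumr_ge0 => j jk.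
by rewrite -mulNr mulr_ge0 // oppr_ge0 hZ // eq_sym.
Qed.

Lemma Z_unit A x : Zmx A -> (forall i, 0 <= x i 0) ->
  (forall i, 0 < (A *m x) i 0) -> A \in unitmx.
Proof.
move=> hZ hx hAx; rewrite -unitmx_tr -row_free_unit; apply: inj_row_free => w hw.
have h0 : A *m w^T = 0 by rewrite -[A]trmxK -trmx_mul hw trmx0.
apply/matrixP => i j; rewrite (ord1 i) [RHS]mxE.
apply/eqP; rewrite eq_le; apply/andP; split.
- have := Z_mono (y := - w^T) hZ hx hAx.
  rewrite mulmxN h0 oppr0 => /(_ (fun _ => ltac:(by rewrite mxE)) j).
  by rewrite !mxE oppr_ge0.
- have := Z_mono (y := w^T) hZ hx hAx.
  rewrite h0 => /(_ (fun _ => ltac:(by rewrite mxE)) j).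
  by rewrite !mxE.
Qed.

Lemma Z_inv A x : Zmx A -> (forall i, 0 <= x i 0) ->
  (forall i, 0 < (A *m x) i 0) -> forall i j, 0 <= invmx A i j.
Proof.
move=> hZ hx hAx i j.
have hu := Z_unit hZ hx hAx.
pose y := \col_k invmx A k j.
have : 0 <= y i 0.
  apply: (Z_mono hZ hx hAx) => k.
  have -> : (A *m y) k 0 = (A *m invmx A) k j.
    by rewrite !mxE; apply: eq_bigr => l _; rewrite mxE.
  by rewrite mulmxV // mxE ler0n.
by rewrite mxE.
Qed.

Lemma Z_tr A : Zmx A -> Zmx A^T.
Proof. by move=> hZ i k ik; rewrite mxE hZ // eq_sym. Qed.

Lemma Z_invT A x : Zmx A -> (forall i, 0 <= x i 0) ->
  (forall i, 0 < (A^T *m x) i 0) -> A \in unitmx /\ forall i j, 0 <= invmx A i j.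
Proof.
move=> hZ hx hAx; split.
  by rewrite -unitmx_tr; apply: Z_unit (Z_tr hZ) hx hAx.
move=> i j; have := Z_inv (Z_tr hZ) hx hAx j i.
by rewrite -trmx_inv mxE.
Qed.

End Z.

Section Main.
Variables (R : realFieldType) (n M : nat) (P1 : 'I_M -> 'M[R]_n)
  (G : 'I_M -> 'cV[R]_n) (m : 'cV[R]_n) (gamma : R).
Hypotheses (hP : forall a i j, 0 <= P1 a i j) (hG : forall a j, 0 < G a j 0)
  (hm : forall j, 0 < m j 0) (hg : 0 <= gamma).

Definition Qm (pi : {ffun 'I_n -> 'I_M}) : 'M[R]_n := \matrix_(i, j) P1 (pi i) i j.
Definition Gv (pi : {ffun 'I_n -> 'I_M}) : 'cV[R]_n := \col_i G (pi i) i 0.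
Definition Am pi : 'M[R]_n := 1%:M - gamma *: Qm pi.
Definition Vv pi := invmx (Am pi) *m Gv pi.
Definition good pi := (Am pi \in unitmx) && [forall i, forall j, 0 <= invmx (Am pi) i j].
Definition dot (u w : 'cV[R]_n) := (u^T *m w) 0 0.
Definition obj pi := dot m (Vv pi).

Lemma dotE u w : dot u w = \sum_j u j 0 * w j 0.
Proof. by rewrite /dot mxE; apply: eq_bigr => j _; rewrite mxE. Qed.

Lemma dotC u w : dot u w = dot w u.
Proof. by rewrite !dotE; apply: eq_bigr => j _; rewrite mulrC. Qed.

Lemma Am_Z pi : Zmx (Am pi).
Proof.
move=> i k ik; rewrite !mxE (negbTE ik) mulr0n sub0r oppr_le0 mulr_ge0 //.
Qed.

Lemma Am_row pi (V : 'cV[R]_n) k :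
  (Am pi *m V) k 0 = V k 0 - gamma * (P1 (pi k) *m V) k 0.
Proof.
rewrite mulmxBl mul1mx -scalemxAl.
have -> : (V - gamma *: (Qm pi *m V)) k 0 = V k 0 - gamma * (Qm pi *m V) k 0 by rewrite !mxE.
congr (_ - gamma * _); rewrite !mxE; apply: eq_bigr => j _; by rewrite ?mxE.
Qed.

Lemma good_mono pi : good pi -> forall y : 'cV[R]_n, (forall i, 0 <= (Am pi *m y) i 0) ->
  forall i, 0 <= y i 0.
Proof.
move=> /andP [hu /forallP hi] y hy i.
rewrite -(mulKmx hu y); apply: nn_mul hy i => a b.
by have /forallP := hi a; apply.
Qed.

Lemma good_inv pi : good pi -> forall i j, 0 <= invmx (Am pi) i j.
Proof. by move=> /andP [_ /forallP hi] a b; have /forallP := hi a; apply. Qed.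

Lemma good_of pi (x : 'cV[R]_n) : (forall i, 0 <= x i 0) -> (forall i, 0 < (Am pi *m x) i 0) ->
  good pi.
Proof.
move=> hx hAx; apply/andP; split; first exact: Z_unit (Am_Z pi) hx hAx.
apply/forallP => i; apply/forallP => j; exact: Z_inv (Am_Z pi) hx hAx i j.
Qed.

Lemma Gv_pos pi j : 0 < Gv pi j 0.
Proof. by rewrite mxE. Qed.

Lemma AmV pi : good pi -> Am pi *m Vv pi = Gv pi.
Proof. by move=> /andP [hu _]; rewrite /Vv mulKVmx. Qed.

Lemma Vv_ge0 pi : good pi -> forall i, 0 <= Vv pi i 0.
Proof.
move=> hp; apply: nn_mul; first exact: good_inv.
by move=> i; apply: ltW; apply: Gv_pos.
Qed.


Lemma feas_entry g th : primal_feasible P1 m g th -> forall k,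
  \sum_a th a k 0 - g * \sum_a \sum_j P1 a j k * th a j 0 = m k 0.
Proof.
move=> [_ E] k; have := congr1 (fun X : 'cV[R]_n => X k 0) E.
rewrite !mxE !summxE => h; rewrite -[m k 0]opprK -h opprB.
suff -> : \sum_a \sum_j P1 a j k * th a j 0 = \sum_a ((P1 a)^T *m th a) k 0 by [].
apply: eq_bigr => a _.
by rewrite mxE; apply: eq_bigr => j _; rewrite mxE.
Qed.

Lemma exists_good : (exists g', gamma <= g' /\ exists th, primal_feasible P1 m g' th) ->
  exists pi, good pi.
Proof.
move=> [g' [hgg [th hth]]].
have hE := feas_entry hth; have th0 := hth.1.
pose B : 'M[R]_n := \matrix_(j, k) \sum_a th a j 0 * ((j == k)%:R - gamma * P1 a j k).
have BZ : Zmx B.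
  move=> j k jk; rewrite mxE -oppr_ge0 -sumrN; apply: sumr_ge0 => a _.
  by rewrite (negbTE jk) sub0r mulrN opprK mulr_ge0 // mulr_ge0.
pose one : 'cV[R]_n := const_mx 1.
have hone : forall i, 0 <= one i 0 by move=> i; rewrite mxE ler01.
have delta (F : 'I_n -> R) k : \sum_j F j * (j == k)%:R = F k.
  rewrite (bigD1 k) //= eqxx mulr1 big1 ?addr0 // => j /negbTE ->.
  by rewrite mulr0.
have delta2 (F : 'I_n -> R) j : \sum_i (j == i)%:R * F i = F j.
  rewrite (bigD1 j) //= eqxx mul1r big1 ?addr0 // => i.
  by rewrite eq_sym => /negbTE ->; rewrite mul0r.
have hBT : forall k, 0 < (B^T *m one) k 0.
  move=> k.
  have -> : (B^T *m one) k 0 =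
     \sum_a th a k 0 - gamma * \sum_a \sum_j P1 a j k * th a j 0.
    rewrite mxE; under eq_bigr do rewrite !mxE mulr1.
    rewrite exchange_big /= mulr_sumr -sumrB; apply: eq_bigr => a _.
    rewrite -(delta (fun j => th a j 0)) mulr_sumr -sumrB.
    by apply: eq_bigr => j _; rewrite mulrBr [P1 a j k * _]mulrC mulrCA.
  have s0 : 0 <= \sum_a \sum_j P1 a j k * th a j 0.
    by apply: sumr_ge0 => a _; apply: sumr_ge0 => j _; rewrite mulr_ge0.
  apply: lt_le_trans (hm k) _; rewrite -(hE k) lerD2l lerN2.
  exact: ler_wpM2r.
have [Bu Binv] := Z_invT BZ hone hBT.
pose y := invmx B *m one.
have y0 : forall i, 0 <= y i 0 by apply: nn_mul.
have By : B *m y = one by rewrite /y mulKVmx.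
have hex : forall j, exists a, 0 < y j 0 - gamma * (P1 a *m y) j 0.
  move=> j; case: (boolP [exists a, 0 < y j 0 - gamma * (P1 a *m y) j 0]) => [/existsP [a ha] | /existsPn hn]; first by exists a.
  exfalso.
  have := congr1 (fun X : 'cV[R]_n => X j 0) By.
  have -> : (B *m y) j 0 = \sum_a th a j 0 * (y j 0 - gamma * (P1 a *m y) j 0).
    rewrite mxE; under eq_bigr do rewrite mxE big_distrl /=.
    rewrite exchange_big /=; apply: eq_bigr => a _.
    rewrite mulrBr -(delta2 (fun i => th a j 0 * y i 0) j) mxE !mulr_sumr -sumrB.
    by apply: eq_bigr => k _; ring.
  rewrite [RHS]mxE => h.
  have : \sum_a th a j 0 * (y j 0 - gamma * (P1 a *m y) j 0) <= 0.
    rewrite -oppr_ge0 -sumrN; apply: sumr_ge0 => a _.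
    rewrite -mulrN mulr_ge0 // oppr_ge0 leNgt; exact: hn.
  by rewrite h ler10.
have [f hf] := fin_all_exists hex.
exists [ffun j => f j]; apply: (good_of y0) => j.
by rewrite Am_row ffunE.
Qed.

Lemma sum_sel0 (pi : {ffun 'I_n -> 'I_M}) j (c : R) :
  \sum_a (if pi j == a then c else 0) = c.
Proof.
rewrite (bigD1 (pi j)) //= eqxx big1 ?addr0 // => a /negbTE.
by rewrite eq_sym => ->.
Qed.

Lemma sum_sel (pi : {ffun 'I_n -> 'I_M}) j (F : 'I_M -> R) (c : R) :
  \sum_a F a * (if pi j == a then c else 0) = F (pi j) * c.
Proof.
rewrite (bigD1 (pi j)) //= eqxx big1 ?addr0 // => a /negbTE.
by rewrite eq_sym => ->; rewrite mulr0.
Qed.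

Lemma AmT_row pi (x : 'cV[R]_n) k :
  ((Am pi)^T *m x) k 0 = x k 0 - gamma * \sum_j P1 (pi j) j k * x j 0.
Proof.
rewrite /Am linearB /= linearZ /= tr_scalar_mx mulmxBl mul1mx -scalemxAl.
have -> : (x - gamma *: ((Qm pi)^T *m x)) k 0 = x k 0 - gamma * ((Qm pi)^T *m x) k 0
  by rewrite !mxE.
by rewrite mxE; congr (_ - _ * _); apply: eq_bigr => j _; rewrite !mxE.
Qed.

Lemma dot_mulT (A : 'M[R]_n) u w : dot (A *m u) w = dot u (A^T *m w).
Proof. by rewrite /dot trmx_mul mulmxA. Qed.

Lemma weak th V : primal_feasible P1 m gamma th -> dual_feasible P1 G gamma V ->
  dot m V <= primal_obj G th.
Proof.
move=> [th0 E] hV.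
have -> : primal_obj G th = \sum_a dot (G a) (th a) by [].
apply: (@le_trans _ _ (\sum_a dot (V - gamma *: (P1 a *m V)) (th a))).
  have key : \sum_a (V - gamma *: (P1 a *m V))^T *m th a =
      V^T *m (\sum_a th a - gamma *: \sum_a (P1 a)^T *m th a).
    rewrite mulmxBr -scalemxAr !mulmx_sumr scaler_sumr -sumrB; apply: eq_bigr => a _.
    by rewrite linearB /= linearZ /= mulmxBl -scalemxAl trmx_mul mulmxA.
  have hm' : \sum_a th a - gamma *: \sum_a (P1 a)^T *m th a = m.
    by rewrite -[m]opprK -E opprB.
  rewrite hm' in key.
  by rewrite dotC /dot -key summxE.
apply: ler_sum => a _; rewrite !dotE; apply: ler_sum => j _.
apply: ler_wpM2r; first exact: th0.
have := hV a j.
have -> : (gamma *: (P1 a *m V) + G a) j 0 = gamma * (P1 a *m V) j 0 + G a j 0 by rewrite !mxE.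
have -> : (V - gamma *: (P1 a *m V)) j 0 = V j 0 - gamma * (P1 a *m V) j 0 by rewrite !mxE.
by rewrite lerBlDl.
Qed.

Lemma main_generic :
  (exists g', gamma <= g' /\ exists th, primal_feasible P1 m g' th) ->
  exists (theta : 'I_M -> 'cV[R]_n) (V : 'cV[R]_n),
    primal_solution P1 G m gamma theta /\ dual_solution P1 G m gamma V /\
    (forall j : 'I_n, exists a : 'I_M,
        V j 0 = gamma * (P1 a *m V) j 0 + G a j 0 /\ 0 < theta a j 0) /\
    (exists theta' : 'I_M -> 'cV[R]_n,
        primal_solution P1 G m gamma theta' /\
        forall j : 'I_n, exists a : 'I_M,
          0 < theta' a j 0 /\ forall a' : 'I_M, a' <> a -> theta' a' j 0 = 0).
Proof.
move=> hfe; have [pi0 hpi0] := exists_good hfe.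
have [pi hpi hmin] := @real_arg_minP R _ pi0 good obj hpi0 (fun p _ => num_real (obj p)).
have {}hmin p : good p -> obj pi <= obj p := hmin p.
have hAV := AmV hpi; have V0 := Vv_ge0 hpi.
set V := Vv pi in hAV V0 hmin *.
have hAVe j : V j 0 - gamma * (P1 (pi j) *m V) j 0 = G (pi j) j 0.
  by have := congr1 (fun X : 'cV[R]_n => X j 0) hAV; rewrite Am_row [RHS]mxE.
have dfeas : dual_feasible P1 G gamma V.
  move=> b k; rewrite leNgt; apply/negP => hlt.
  have {}hlt : G b k 0 < V k 0 - gamma * (P1 b *m V) k 0.
    move: hlt; have -> : (gamma *: (P1 b *m V) + G b) k 0 =
       gamma * (P1 b *m V) k 0 + G b k 0 by rewrite !mxE.
    by rewrite ltrBrDl.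
  pose pi' : {ffun 'I_n -> 'I_M} := [ffun j => if j == k then b else pi j].
  have hA' j : Gv pi' j 0 <= (Am pi' *m V) j 0.
    rewrite Am_row [Gv _ _ _]mxE ffunE; case: eqP => [-> | _]; first exact: ltW.
    by rewrite hAVe.
  have hk : Gv pi' k 0 < (Am pi' *m V) k 0.
    by rewrite Am_row [Gv _ _ _]mxE ffunE eqxx.
  have g' : good pi' by apply: (good_of V0) => j; apply: lt_le_trans (Gv_pos _ _) (hA' j).
  have hmp := hmin _ g'.
  pose W := V - Vv pi'.
  have hAW j : (Am pi' *m W) j 0 = (Am pi' *m V) j 0 - Gv pi' j 0.
    by rewrite /W mulmxBr (AmV g') mxBE.
  have W0 : forall j, 0 <= W j 0.
    by apply: (@good_mono pi' g' W) => j; rewrite hAW subr_ge0.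
  have [j hj] : exists j, 0 < W j 0.
    case: (boolP [exists j, 0 < W j 0]) => [/existsP //|/existsPn hn]; exfalso.
    have W00 : forall j, W j 0 = 0.
      by move=> j; apply/eqP; rewrite eq_le W0 andbT leNgt hn.
    have : 0 < (Am pi' *m W) k 0 by rewrite hAW subr_gt0.
    by rewrite mxE big1 ?ltxx // => i _; rewrite W00 mulr0.
  have : 0 < dot m W.
    rewrite dotE (bigD1 j) //=; apply: ltr_wpDr; last by rewrite mulr_gt0.
    by apply: sumr_ge0 => i _; rewrite mulr_ge0 // ltW.
  have -> : dot m W = obj pi - obj pi'.
    rewrite /obj !dotE -sumrB; apply: eq_bigr => i _; by rewrite /W !mxE mulrBr.
  by rewrite subr_gt0 ltNge hmp.
have hu : Am pi \in unitmx by case/andP: hpi.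
pose x := (invmx (Am pi))^T *m m.
have x0 : forall i, 0 <= x i 0.
  apply: nn_mul => [i j|i]; last exact: ltW.
  by rewrite mxE; apply: good_inv.
have hAx : (Am pi)^T *m x = m by rewrite /x trmx_inv mulKVmx // unitmx_tr.
have xpos : forall i, 0 < x i 0.
  by apply: (Z_pos (Z_tr (Am_Z pi)) x0) => i; rewrite hAx.
have hAxe k : x k 0 - gamma * \sum_j P1 (pi j) j k * x j 0 = m k 0.
  by rewrite -AmT_row hAx.
have hobj : dot (Gv pi) x = dot m V by rewrite -hAV dot_mulT hAx dotC.
clearbody x.
pose theta a : 'cV[R]_n := \col_j (if pi j == a then x j 0 else 0).
have thE a j : theta a j 0 = if pi j == a then x j 0 else 0 by rewrite mxE.
have tfeas : primal_feasible P1 m gamma theta.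
  split; first by move=> a i; rewrite thE; case: eqP.
  apply/matrixP => k i; rewrite (ord1 i) !mxE !summxE.
  have -> : \sum_a ((P1 a)^T *m theta a) k 0 = \sum_j P1 (pi j) j k * x j 0.
    under eq_bigr do rewrite mxE.
    rewrite exchange_big /=; apply: eq_bigr => j _.
    under eq_bigr do rewrite mxE thE.
    by rewrite sum_sel.
  have -> : \sum_a theta a k 0 = x k 0 by under eq_bigr do rewrite thE; rewrite sum_sel0.
  by rewrite -hAxe opprB.
have tobj : primal_obj G theta = dot m V.
  rewrite -hobj /primal_obj dotE.
  under eq_bigr do rewrite mxE.
  rewrite exchange_big /=; apply: eq_bigr => j _.
  under eq_bigr do rewrite mxE thE.
  by rewrite sum_sel mxE.
have tsol : primal_solution P1 G m gamma theta.
  by split => // th' hth'; rewrite tobj; apply: weak.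
exists theta, V; split => //; split; [|split].
- split => // V' hV'.
  have -> : dual_obj m V' = dot (Am pi *m V') x.
    by rewrite -[dual_obj m V']/(dot m V') -hAx dot_mulT trmxK dotC.
  have -> : dual_obj m V = dot (Gv pi) x by rewrite hobj.
  rewrite !dotE; apply: ler_sum => j _; apply: ler_wpM2r; first exact: x0.
  rewrite Am_row [Gv _ _ _]mxE lerBlDl.
  have := hV' (pi j) j.
  have -> : (gamma *: (P1 (pi j) *m V') + G (pi j)) j 0 =
     gamma * (P1 (pi j) *m V') j 0 + G (pi j) j 0 by rewrite !mxE.
  by [].
- move=> j; exists (pi j); split; last by rewrite thE eqxx.
  by rewrite -(hAVe j) addrC subrK.
- exists theta; split => // j; exists (pi j); split; first by rewrite thE eqxx.
  by move=> a' ha'; rewrite thE; case: eqP => // e; case: ha'.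
Qed.
End Main.
Theorem lemma2 (R : realFieldType) (S : Type) (n M L : nat)
  (X : S -> Prop) (D : 'I_n.+1 -> S -> Prop) (Attr : S -> Prop)
  (T : 'I_M -> 'I_L -> S -> S) (mu : (S -> Prop) -> R)
  (v : 'I_L -> R) (Gal : 'I_M -> 'I_L -> 'cV[R]_n) (m : 'cV[R]_n)
  (* partition of the state space X, attractor in D_N *)
  (hDX : forall i x, D i x -> X x)
  (hcover : forall x, X x -> exists i, D i x)
  (hdisj : forall i j x, D i x -> D j x -> i = j)
  (hAttr : forall x, Attr x -> D ord_max x)
  (hT : forall a l x, X x -> X (T a l x))
  (* measure: nonnegative, cells of positive measure *)
  (hmu : forall A, 0 <= mu A)
  (hmuD : forall i, 0 < mu (D i))
  (* probabilities of the uncertainty values *)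
  (hv : forall l, 0 <= v l) (hv1 : \sum_(l < L) v l = 1)
  (* positivity assumptions *)
  (hm : forall j, 0 < m j 0)
  (hG : forall a j, 0 < cost_avg v Gal a j 0) :
  let P1 := fun a => sub1 (markov_avg D T mu v a) in
  let G := cost_avg v Gal in
  (exists gamma0, 1 < gamma0 /\ exists theta, primal_feasible P1 m gamma0 theta) ->
  forall gamma : R, 1 <= gamma ->
  (* gamma < sup { gamma' > 1 | (P) feasible at gamma' } *)
  (exists gamma', gamma < gamma' /\ 1 < gamma' /\
                  exists theta, primal_feasible P1 m gamma' theta) ->
  exists (theta : 'I_M -> 'cV[R]_n) (V : 'cV[R]_n),
    primal_solution P1 G m gamma theta /\ dual_solution P1 G m gamma V /\
    (forall j : 'I_n, exists a : 'I_M,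
        V j 0 = gamma * (P1 a *m V) j 0 + G a j 0 /\ 0 < theta a j 0) /\
    (exists theta' : 'I_M -> 'cV[R]_n,
        primal_solution P1 G m gamma theta' /\
        forall j : 'I_n, exists a : 'I_M,
          0 < theta' a j 0 /\ forall a' : 'I_M, a' <> a -> theta' a' j 0 = 0).
Proof.
move=> P1 G _ gamma hg1 [g' [hgg' [_ hth]]].
have hP a i j : 0 <= P1 a i j.
  rewrite /P1 /sub1 /markov_avg mxE summxE; apply: sumr_ge0 => l _.
  by rewrite !mxE mulr_ge0 // divr_ge0.
have hg : 0 <= gamma by apply: le_trans hg1; exact: ler01.
apply: (main_generic hP hG hm hg).
by exists g'; split; [exact: ltW | exact: hth].
Qed.
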